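(* Let $D$ be the distance matrix of $n$ points in $\mathbb R^d$ with $n>d+2$, let $C$ be its centered distance matrix, and let $\lambda_2(C)$ denote the second largest eigenvalue of $C$ (counted with multiplicity). Then $D=C+\lambda_2(C)\,J$. In particular $D$ is uniquely determined by $C$, and hence by $\Delta(D)$.
   Context: The distance matrix of points $x_1,\dots,x_n\in\mathbb R^d$ is $D_{ij}=\|x_i-x_j\|_2^2$. Let $J=\mathbf 1\mathbf 1^T-I$. The centered distance matrix of $D$ is $C=D-\sigma_DJ$ with $\sigma_D=\mathrm{tr}(DJ)/\|J\|_F^2$, i.e. the component of $D$ orthogonal to $J$ in the trace inner product. $\Delta(D)=(D_{ij}-D_{ik})$ indexed by triples $(i,j,k)$ of pairwise distinct indices with $j<k$; its kernel on symmetric hollow matrices is the span of $J$. *)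

(* Defs.v *)
From HB Require Import structures.
From mathcomp Require Import all_boot all_order all_algebra.
Set Implicit Arguments. Unset Strict Implicit. Unset Printing Implicit Defensive.
Import Order.TTheory GRing.Theory Num.Theory.
Local Open Scope ring_scope.

(* Points x_1..x_n in R^d are the rows of x : 'M_(n,d). *)
Definition dist_mx (R : rcfType) (n d : nat) (x : 'M[R]_(n, d)) : 'M[R]_n :=
  \matrix_(i, j) \sum_(k < d) (x i k - x j k) ^+ 2.

Definition Jmx (R : rcfType) (n : nat) : 'M[R]_n := const_mx 1 - 1%:M.

Definition frob2 (R : rcfType) (n : nat) (A : 'M[R]_n) : R :=
  \sum_(i < n) \sum_(j < n) A i j ^+ 2.

Definition sigma_mx (R : rcfType) (n : nat) (D : 'M[R]_n) : R :=
  \tr (D *m Jmx R n) / frob2 (Jmx R n).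

Definition centered (R : rcfType) (n : nat) (D : 'M[R]_n) : 'M[R]_n :=
  D - sigma_mx D *: Jmx R n.

(* l is the second largest eigenvalue of A counted with multiplicity:
   the characteristic polynomial of A splits as prod (X - s_i) with
   s sorted non-increasingly, and l = s_1 (0-indexed). *)
Definition second_eig (R : rcfType) (n : nat) (A : 'M[R]_n) (l : R) : Prop :=
  exists s : seq R,
    [/\ sorted (>=%R) s, char_poly A = \prod_(a <- s) ('X - a%:P) & s`_1 = l].

(* Delta(D) and Delta(D') agree: D_ij - D_ik = D'_ij - D'_ik for all
   pairwise distinct i, j, k with j < k. *)
Definition same_Delta (R : rcfType) (n : nat) (D D' : 'M[R]_n) : Prop :=
  forall i j k : 'I_n, i != j -> i != k -> (j < k)%N ->
    D i j - D i k = D' i j - D' i k.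

(* Main.v *)
Require Import Defs.
From HB Require Import structures.
From mathcomp Require Import all_boot all_order all_algebra.
From mathcomp Require Import sesquilinear spectral.
From mathcomp.real_closed Require Import complex.
From mathcomp Require Import ring lra.
Set Implicit Arguments. Unset Strict Implicit. Unset Printing Implicit Defensive.
Import Order.TTheory GRing.Theory Num.Theory.
Local Open Scope ring_scope.

Section S.
Variable R : rcfType.
Definition rsq n d (x : 'M[R]_(n, d)) : 'cV[R]_n := \col_i \sum_(k < d) x i k ^+ 2.

Lemma dist_decomp n d (x : 'M[R]_(n, d)) :
  dist_mx x = rsq x *m (const_mx 1)^T + const_mx 1 *m (rsq x)^T - 2%:R *: (x *m x^T).
Proof.
apply/matrixP => i j; rewrite !mxE !big_ord1 !mxE /=.
rewrite mulr1 mul1r mulr_sumr -!big_split -sumrB /=.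
by apply: eq_bigr => k _; rewrite !mxE; ring.
Qed.
Lemma char_similar (F : comNzRingType) n (P Q D : 'M[F]_n) :
  Q *m P = 1%:M -> char_poly (Q *m D *m P) = char_poly D.
Proof.
move=> QP; rewrite /char_poly /char_poly_mx.
have QP' : map_mx polyC Q *m map_mx polyC P = 1%:M by rewrite -map_mxM QP map_mx1.
have -> : 'X%:M - map_mx polyC (Q *m D *m P) =
  map_mx polyC Q *m ('X%:M - map_mx polyC D) *m map_mx polyC P.
  rewrite mulmxBr mulmxBl !map_mxM; congr (_ - _).
  by rewrite mul_mx_scalar -scalemxAl QP' scalemx1.
rewrite !det_mulmx mulrC mulrA -det_mulmx mulmxE.
by rewrite -mulmxE [X in \det X](_ : _ = 1%:M) ?det1 ?mul1r //;
  rewrite -QP' (mulmx1C QP').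
Qed.

Lemma ker_exists (F : fieldType) n m (K : 'M[F]_(n, m)) : (m < n)%N ->
  exists c : 'rV[F]_n, c != 0 /\ c *m K = 0.
Proof.
move=> mn.
have : kermx K != 0.
  rewrite -mxrank_eq0 mxrank_ker subn_eq0 -ltnNge.
  exact: leq_ltn_trans (rank_leq_col K) mn.
move=> kn0.
have [i ri] : exists i, row i (kermx K) != 0.
  apply/existsP; apply: contraNT kn0; rewrite negb_exists => /forallP H.
  by apply/eqP/row_matrixP => i; rewrite row0; apply/eqP; move: (H i); rewrite negbK.
by exists (row i (kermx K)); split => //; rewrite -row_mul mulmx_ker row0.
Qed.
Local Notation rc := (real_complex R).
Local Open Scope sesquilinear_scope.

Lemma rc_real (a : R) : rc a \is Num.real.
Proof. by rewrite /= /real_complex_def complex_real. Qed.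

Lemma conj_rc (a : R) : (rc a)^* = rc a.
Proof. exact/CrealP/rc_real. Qed.

Lemma spec_real n (A : 'M[R]_n) : A^T = A ->
  exists (P : 'M[R[i]]_n) (r : 'I_n -> R), P \is unitarymx /\
    map_mx rc A = P^t* *m diag_mx (\row_k rc (r k)) *m P.
Proof.
move=> As.
have Bh : map_mx rc A \is hermsymmx.
  apply: realsym_hermsym.
    apply/is_hermitianmxP; rewrite expr0 scale1r.
    apply/matrixP => i j; rewrite !mxE; by rewrite -[in LHS]As mxE.
  by apply/mxOverP => i j; rewrite mxE rc_real.
have /orthomx_spectralP Beq := hermitian_normalmx Bh.
have Er := hermitian_spectral_diag_real Bh.
move: Beq Er.
set B := map_mx rc A; set P := spectralmx B; set E := spectral_diag B => Beq Er.
have Pu : P \is unitarymx := spectral_unitarymx B.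
exists P, (fun k => complex.Re (E 0 k)); split => //.
have -> : diag_mx (\row_k rc (complex.Re (E 0 k))) = diag_mx E.
  congr diag_mx; apply/rowP => k; rewrite mxE.
  have := mxOverP Er 0 k; case: (E 0 k) => a b.
  by rewrite complex_real => /eqP ->.
by rewrite -(invmx_unitary Pu).
Qed.
Lemma char_real n (A : 'M[R]_n) (P : 'M[R[i]]_n) (r : 'I_n -> R) :
  P \is unitarymx -> map_mx rc A = P^t* *m diag_mx (\row_k rc (r k)) *m P ->
  char_poly A = \prod_(k < n) ('X - (r k)%:P).
Proof.
move=> /unitarymxP Pu Heq; apply: (@map_poly_inj _ _ rc).
rewrite map_char_poly Heq char_similar; last exact: mulmx1C.
rewrite char_poly_trig ?diag_mx_is_trig // rmorph_prod.
by apply: eq_bigr => k _; rewrite !mxE eqxx mulr1n /= map_polyXsubC.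
Qed.

Lemma tmul m n p (A : 'M[R[i]]_(m, n)) (B : 'M[R[i]]_(n, p)) :
  (A *m B)^t* = B^t* *m A^t*.
Proof. by rewrite trmx_mul map_mxM. Qed.

Lemma treal m n (w : 'M[R]_(m, n)) : (map_mx rc w)^t* = (map_mx rc w)^T.
Proof. by apply/matrixP => i j; rewrite !mxE conj_rc. Qed.

Lemma quad_unit n (P B : 'M[R[i]]_n) (c : 'rV_n) : P \is unitarymx ->
  (c *m P) *m (P^t* *m B *m P) *m (c *m P)^t* = c *m B *m c^t*.
Proof.
move=> Pu; by rewrite tmul !mulmxA !mulmxtVK.
Qed.

Lemma zz_unit n (P : 'M[R[i]]_n) (c : 'rV_n) : P \is unitarymx ->
  (c *m P) *m (c *m P)^t* = c *m c^t*.
Proof. by move=> Pu; rewrite tmul mulmxA mulmxtVK. Qed.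

Lemma quad_diag n (c E : 'rV[R[i]]_n) :
  (c *m diag_mx E *m c^t*) 0 0 = \sum_k E 0 k * (c 0 k * (c 0 k)^*).
Proof.
rewrite mul_mx_diag mxE; apply: eq_bigr => k _; rewrite !mxE; ring.
Qed.

Lemma quad_id n (c : 'rV[R[i]]_n) :
  (c *m c^t*) 0 0 = \sum_k c 0 k * (c 0 k)^*.
Proof. by rewrite mxE; apply: eq_bigr => k _; rewrite !mxE. Qed.

Lemma quad_ge0 n (w : 'M[R[i]]_(1, n)) : 0 <= (w *m w^t*) 0 0.
Proof.
rewrite mxE; apply: sumr_ge0 => k _; rewrite !mxE; exact: mul_conjC_ge0.
Qed.
Lemma J_decomp n : Jmx R n = (const_mx 1 : 'cV_n) *m (const_mx 1)^T - 1%:M.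
Proof.
by apply/matrixP => i j; rewrite !mxE big_ord1 !mxE mulr1.
Qed.

Lemma fD n (z : 'rV[R[i]]_n) (A B : 'M_n) (w : 'cV_n) :
  z *m (A + B) *m w = z *m A *m w + z *m B *m w.
Proof. by rewrite mulmxDr mulmxDl. Qed.
Lemma fN n (z : 'rV[R[i]]_n) (A : 'M_n) (w : 'cV_n) :
  z *m (- A) *m w = - (z *m A *m w).
Proof. by rewrite mulmxN mulNmx. Qed.
Lemma fZ n (z : 'rV[R[i]]_n) a (A : 'M_n) (w : 'cV_n) :
  z *m (a *: A) *m w = a *: (z *m A *m w).
Proof. by rewrite -scalemxAr -scalemxAl. Qed.

Lemma tr0 m n : (0 : 'M[R[i]]_(m, n))^t* = 0.
Proof. by apply/matrixP => i j; rewrite !mxE conjC0. Qed.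

Lemma QF_abs n d (u e : 'cV[R[i]]_n) (X : 'M[R[i]]_(n, d)) (a b : R[i])
  (z : 'rV_n) (w : 'cV_n) :
  z *m e = 0 -> e^T *m w = 0 ->
  z *m (u *m e^T + e *m u^T - b *: (X *m X^T) - a *: (e *m e^T - 1%:M)) *m w
  = a *: (z *m w) - b *: (z *m X *m (X^T *m w)).
Proof.
move=> ze ew.
rewrite !fD !fN !fZ.
have t5 : z *m (e *m e^T - 1%:M) *m w = z *m (e *m e^T) *m w - z *m w.
  by rewrite mulmxBr mulmxBl mulmx1.
rewrite t5.
have t1 : z *m (u *m e^T) *m w = 0 by rewrite mulmxA -mulmxA ew mulmx0.
have t2 : z *m (e *m u^T) *m w = 0 by rewrite mulmxA ze !mul0mx.
have t3 : z *m (X *m X^T) *m w = z *m X *m (X^T *m w) by rewrite mulmxA -mulmxA.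
have t4 : z *m (e *m e^T) *m w = 0 by rewrite mulmxA ze !mul0mx.
rewrite t1 t2 t3 t4 !add0r scalerN opprK.
by rewrite addrC.
Qed.

Lemma QF n d (x : 'M[R]_(n, d)) (t : R) (z : 'rV[R[i]]_n) :
  z *m map_mx rc (const_mx 1 : 'cV_n) = 0 ->
  z *m map_mx rc (dist_mx x - t *: Jmx R n) *m z^t* =
   rc t *: (z *m z^t*) - 2%:R *: ((z *m map_mx rc x) *m (z *m map_mx rc x)^t*).
Proof.
move=> ze.
set e := (const_mx 1 : 'cV_n) in ze *; set u := rsq x.
have ez : (map_mx rc e)^T *m z^t* = 0 by rewrite -treal -tmul ze tr0.
have Hm : map_mx rc (dist_mx x - t *: Jmx R n) =
  map_mx rc u *m (map_mx rc e)^T + map_mx rc e *m (map_mx rc u)^T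
  - 2%:R *: (map_mx rc x *m (map_mx rc x)^T)
  - rc t *: (map_mx rc e *m (map_mx rc e)^T - 1%:M).
  rewrite dist_decomp J_decomp.
  by rewrite !(map_mxD, map_mxN, map_mxZ, map_mxM, map_mx1) -!map_trmx rmorph_nat.
rewrite Hm (QF_abs _ _ _ _ ze ez).
by rewrite tmul treal mulmxA.
Qed.
Lemma count_card (T : finType) (P : pred T) : count P (enum T) = #|P|.
Proof. by rewrite cardE /enum_mem size_filter /enum_mem filter_predT. Qed.

Lemma entry_lin (a b : R[i]) (A B : 'M[R[i]]_1) :
  (a *: A - b *: B) 0 0 = a * A 0 0 - b * B 0 0.
Proof. by rewrite !mxE. Qed.

Lemma key_eq n d (x : 'M[R]_(n, d)) t (P : 'M[R[i]]_n) r (c : 'rV[R[i]]_n) :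
  P \is unitarymx ->
  map_mx rc (dist_mx x - t *: Jmx R n) = P^t* *m diag_mx (\row_k rc (r k)) *m P ->
  c *m P *m map_mx rc (const_mx 1 : 'cV_n) = 0 ->
  \sum_k rc (r k - t) * (c 0 k * (c 0 k)^*) =
   - 2%:R * ((c *m P *m map_mx rc x) *m (c *m P *m map_mx rc x)^t*) 0 0.
Proof.
move=> Pu Aeq ze.
have := QF x t ze; rewrite Aeq quad_unit // zz_unit // => /(congr1 (fun M : 'M[R[i]]_1 => M 0 0)).
rewrite entry_lin quad_diag quad_id.
set q := ((c *m P *m map_mx rc x) *m _) 0 0 => H.
rewrite (eq_bigr (fun k => rc (r k) * (c 0 k * (c 0 k)^*) - rc t * (c 0 k * (c 0 k)^*))); last first.
  by move=> k _; rewrite rmorphB /= mulrBl.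
rewrite sumrB -mulr_sumr.
rewrite (_ : \sum_k rc (r k) * (c 0 k * (c 0 k)^*) = \sum_k (\row_k rc (r k)) 0 k * (c 0 k * (c 0 k)^*)); last first.
  by apply: eq_bigr => k _; rewrite mxE.
by rewrite H; ring.
Qed.
Lemma rc_ge0 (a : R) : (0 <= rc a) = (0 <= a).
Proof. exact: ler0c. Qed.

Lemma rc_eq0 (a : R) : (rc a == 0) = (a == 0).
Proof.
apply/eqP/eqP => [h|->]; last exact: rmorph0.
by apply: complexI; rewrite h.
Qed.

Lemma at_most_one n d (x : 'M[R]_(n, d)) t (P : 'M[R[i]]_n) r :
  P \is unitarymx ->
  map_mx rc (dist_mx x - t *: Jmx R n) = P^t* *m diag_mx (\row_k rc (r k)) *m P ->
  forall i j, t < r i -> t < r j -> i = j.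
Proof.
move=> Pu Aeq i j ti tj; apply/eqP/negPn/negP => ij.
set b := P *m map_mx rc (const_mx 1 : 'cV_n).
pose c : 'rV[R[i]]_n := if (b i 0 == 0) && (b j 0 == 0) then 'e_i
  else (b j 0) *: 'e_i - (b i 0) *: 'e_j.
have cb : c *m b = 0.
  have rowb : forall k, (row k b) 0 0 = b k 0 by move=> k; rewrite mxE.
  apply/rowP => k; rewrite ord1 /c [RHS]mxE; case: ifP => [/andP[/eqP bi /eqP bj]|_].
    by rewrite -rowE rowb bi.
  rewrite mulmxDl mulNmx -!scalemxAl -!rowE.
  by rewrite [LHS]mxE [X in X + _]mxE [X in _ + X]mxE [X in _ - X]mxE !rowb mulrC subrr.
have cz : forall k, k != i -> k != j -> c 0 k = 0.
  move=> k ki kj; rewrite /c; case: ifP => _; rewrite !mxE ?(negbTE ki) ?(negbTE kj) //=.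
  by rewrite !mulr0 subrr.
have cn0 : c != 0.
  rewrite /c; move: (b i 0) (b j 0) => bi bj; case: ifP => [_|/negbT Hb].
    by apply/eqP => /rowP/(_ i); rewrite !mxE !eqxx /= => /eqP; rewrite oner_eq0.
  apply: contra Hb => /eqP c0.
  have /= := congr1 (fun M : 'rV_n => M 0 i) c0; have /= := congr1 (fun M : 'rV_n => M 0 j) c0.
  rewrite !mxE !eqxx /= (negbTE ij) eq_sym (negbTE ij) /= !mulr0 !mulr1 subr0 sub0r.
  by move=> /eqP; rewrite oppr_eq0 => /eqP -> ->; rewrite eqxx.
have ke := key_eq Pu Aeq (_ : c *m P *m _ = 0).
rewrite -mulmxA cb in ke; have {ke} ke := ke erefl.
set g := fun k => rc (r k - t) * (c 0 k * (c 0 k)^*).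
have g0 : forall k, true -> 0 <= g k.
  move=> k _; rewrite /g; case: (eqVneq k i) => [->|ki].
    by rewrite mulr_ge0 ?mul_conjC_ge0 // rc_ge0 subr_ge0 ltW.
  case: (eqVneq k j) => [->|kj].
    by rewrite mulr_ge0 ?mul_conjC_ge0 // rc_ge0 subr_ge0 ltW.
  by rewrite cz // mul0r mulr0.
have s0 : \sum_k g k = 0.
  apply/le_anti/andP; split; last by apply: sumr_ge0.
  rewrite [\sum_k g k]ke mulNr oppr_le0 mulr_ge0 ?ler0n //; exact: quad_ge0.
have gz := psumr_eq0P g0 s0.
have czi : forall k, t < r k -> c 0 k = 0.
  move=> k tk; have := gz k isT; rewrite /g => /eqP; rewrite mulf_eq0 rc_eq0 subr_eq0.
  by rewrite (gt_eqF tk) /= mul_conjC_eq0 => /eqP.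
apply/negP: cn0; rewrite negbK; apply/eqP/rowP => k; rewrite mxE.
case: (eqVneq k i) => [->|ki]; first exact: czi.
case: (eqVneq k j) => [->|kj]; first exact: czi.
exact: cz.
Qed.
Lemma two_ge n d (x : 'M[R]_(n, d)) t (P : 'M[R[i]]_n) r :
  (d + 2 < n)%N -> P \is unitarymx ->
  map_mx rc (dist_mx x - t *: Jmx R n) = P^t* *m diag_mx (\row_k rc (r k)) *m P ->
  (1 < #|[pred k | (t <= r k)%R]|)%N.
Proof.
move=> dn Pu Aeq; apply/negPn/negP => nc.
have n0 : (0 < n)%N by apply: leq_ltn_trans dn.
have [i0 Hi0] : exists i0, forall k, t <= r k -> k = i0.
  case: (pickP [pred k | (t <= r k)%R]) => [i0 Hi0 | H0].
    exists i0 => k tk; apply/eqP/negPn/negP => ki; apply: (negP nc); apply/card_gt1P.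
    by exists k, i0; split; rewrite ?inE.
  by exists (Ordinal n0) => k tk; have := H0 k; rewrite /= tk.
pose K := row_mx (row_mx (P *m map_mx rc (const_mx 1 : 'cV_n)) (P *m map_mx rc x))
   (delta_mx i0 0 : 'cV[R[i]]_n).
have mK : (1 + d + 1 < n)%N by rewrite add1n addn1 -addn2.
have [c [cn0 cK]] := ker_exists K mK.
have [[h1 h2] h3] : (c *m (P *m map_mx rc (const_mx 1 : 'cV_n)) = 0 /\
     c *m (P *m map_mx rc x) = 0) /\ c *m (delta_mx i0 0 : 'cV[R[i]]_n) = 0.
  move/eqP: cK; rewrite /K !mul_mx_row !row_mx_eq0 => /andP[/andP[/eqP -> /eqP ->] /eqP ->].
  by [].
have ci0 : c 0 i0 = 0.
  have := congr1 (fun M : 'cV_1 => M 0 0) h3; rewrite /= -colE !mxE //.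
have h1' : c *m P *m map_mx rc (const_mx 1 : 'cV_n) = 0 by rewrite -mulmxA h1.
have h2' : c *m P *m map_mx rc x = 0 by rewrite -mulmxA h2.
have ke := key_eq Pu Aeq h1'; rewrite h2' mul0mx mxE in ke.
set g := fun k => rc (r k - t) * (c 0 k * (c 0 k)^*) in ke.
have g0 : forall k, true -> 0 <= - g k.
  move=> k _; rewrite /g -mulNr -rmorphN opprB.
  case: (eqVneq k i0) => [->|ki]; first by rewrite ci0 mul0r mulr0.
  rewrite mulr_ge0 ?mul_conjC_ge0 // rc_ge0 subr_ge0.
  by case: leP => // tk; move/eqP: ki; rewrite (Hi0 k (ltW tk)).
have s0 : \sum_k - g k = 0.
  by rewrite sumrN ke mulr0 oppr0.
have gz := psumr_eq0P g0 s0.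
apply/negP: cn0; rewrite negbK; apply/eqP/rowP => k; rewrite mxE.
case: (eqVneq k i0) => [->|ki]; first exact: ci0.
have := gz k isT; rewrite /g => /eqP; rewrite oppr_eq0 mulf_eq0 rc_eq0 subr_eq0.
have tk : r k != t.
  by apply: contra ki => /eqP tk; apply/eqP/Hi0; rewrite tk.
by rewrite (negbTE tk) /= mul_conjC_eq0 => /eqP.
Qed.

Lemma dist_sym n d (x : 'M[R]_(n, d)) i j : dist_mx x i j = dist_mx x j i.
Proof. by rewrite !mxE; apply: eq_bigr => k _; rewrite -opprB sqrrN. Qed.

Lemma dist_diag n d (x : 'M[R]_(n, d)) i : dist_mx x i i = 0.
Proof. by rewrite mxE big1 // => k _; rewrite subrr expr0n. Qed.

Lemma J_entry n (i j : 'I_n) : Jmx R n i j = 1 - (i == j)%:R.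
Proof. by rewrite !mxE. Qed.

Lemma A_sym n d (x : 'M[R]_(n, d)) t :
  (dist_mx x - t *: Jmx R n)^T = dist_mx x - t *: Jmx R n.
Proof.
apply/matrixP => i j; rewrite !mxE eq_sym; congr (_ - _).
by apply: eq_bigr => k _; rewrite -opprB sqrrN.
Qed.

Lemma main n d (x : 'M[R]_(n, d)) t : (d + 2 < n)%N ->
  (exists l, second_eig (dist_mx x - t *: Jmx R n) l) /\
  (forall l, second_eig (dist_mx x - t *: Jmx R n) l -> l = t).
Proof.
move=> dn.
have [P [r [Pu Aeq]]] := spec_real (A_sym x t).
have ch := char_real Pu Aeq.
set A := dist_mx x - t *: Jmx R n in Aeq ch *.
set rs := [seq r k | k <- enum 'I_n].
have chs : char_poly A = \prod_(a <- rs) ('X - a%:P) by rewrite ch big_map big_enum.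
have ca : (count (fun a => (t < a)%R) rs <= 1)%N.
  rewrite count_map count_card leqNgt; apply/negP => /card_gt1P [i [j [hi hj ij]]].
  by move: ij; rewrite (at_most_one Pu Aeq hi hj) eqxx.
have cb : (1 < count (fun a => (t <= a)%R) rs)%N.
  by rewrite count_map count_card; apply: two_ge dn Pu Aeq.
have key : forall s, sorted (>=%R) s -> perm_eq s rs -> s`_1 = t.
  move=> s ss ps.
  have c1 : (count (fun a => (t < a)%R) s <= 1)%N by rewrite (permP ps).
  have c2 : (1 < count (fun a => (t <= a)%R) s)%N by rewrite (permP ps).
  case: s ss ps c1 c2 => [|a [|b s']] //=.
  - by rewrite addn0; case: (t <= a).
  move=> /andP[ab ss'] _ c1 c2.
  have als : all (fun y => y <= b) s'.
    have := order_path_min (_ : transitive (>=%R : rel R)) ss'.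
    by apply; move=> u v w h1 h2; apply: le_trans h2 h1.
  case: (ltgtP b t) => [bt|tb|//].
  - have h0 : count (fun a0 => (t <= a0)%R) s' = 0%N.
      apply/eqP; rewrite -leqn0 leqNgt -has_count; apply/hasPn => y ys.
      by rewrite -ltNge; apply: le_lt_trans bt; move/allP: als; apply.
    by move: c2; rewrite h0 (leNgt t b) bt /= addn0; case: (t <= a).
  - have ta : t < a by apply: lt_le_trans tb ab.
    by move: c1; rewrite ta tb.
split.
  exists (sort >=%R rs)`_1, (sort >=%R rs); split => //.
    by apply: sort_sorted => u v; rewrite orbC le_total.
  by rewrite chs; apply: perm_big; rewrite perm_sym perm_sort.
move=> l [s [ss cs sl]]; rewrite -sl; apply: key => //.
by apply: prod_XsubC_eq; rewrite -cs chs.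
Qed.
End S.

Unset Implicit Arguments.

Theorem theorem4 (R : rcfType) (n d : nat) (x : 'M[R]_(n, d)) :
  (d + 2 < n)%N ->
  [/\ (exists l : R, second_eig (centered (dist_mx x)) l),
      (forall l : R, second_eig (centered (dist_mx x)) l ->
         dist_mx x = centered (dist_mx x) + l *: Jmx R n),
      (forall (d' : nat) (y : 'M[R]_(n, d')), (d' + 2 < n)%N ->
         centered (dist_mx y) = centered (dist_mx x) -> dist_mx y = dist_mx x)
    & (forall (d' : nat) (y : 'M[R]_(n, d')), (d' + 2 < n)%N ->
         same_Delta (dist_mx y) (dist_mx x) -> dist_mx y = dist_mx x)].
Proof.
move=> dn.
have cE : forall D0 : 'M[R]_n, D0 = centered D0 + sigma_mx D0 *: Jmx R n.
  by move=> D0; rewrite /centered subrK.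
have [[l0 hl0] ux] := main x (sigma_mx (dist_mx x)) dn.
split.
- by exists l0.
- by move=> l hl; rewrite (ux l hl); apply: cE.
- move=> d' y dn' Cyx.
  have [_ uy] := main y (sigma_mx (dist_mx y)) dn'.
  have ly := uy l0 (_ : second_eig (centered (dist_mx y)) l0).
  rewrite (cE (dist_mx y)) (cE (dist_mx x)) Cyx -(ux l0 hl0) ly //.
  by rewrite Cyx.
- move=> d' y dn' sd.
  have n1 : (1 < n)%N by apply: leq_ltn_trans dn; rewrite addn2.
  have n0 : (0 < n)%N by apply: ltnW.
  pose i0 := Ordinal n0; pose i1 := Ordinal n1.
  pose E i j := dist_mx y i j - dist_mx x i j.
  have rowc : forall i j k, i != j -> i != k -> E i j = E i k.
    move=> i j k ij ik; rewrite /E.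
    case: (ltngtP j k) => [jk|kj|/val_inj ->//].
      by have := sd i j k ij ik jk; lra.
    by have := sd i k j ik ij kj; lra.
  have Esym : forall i j, E i j = E j i by move=> i j; rewrite /E dist_sym [dist_mx x i j]dist_sym.
  have i01 : i0 != i1 by [].
  have off : forall i j, i != j -> E i j = E i0 i1.
    move=> i j ij; case: (eqVneq i i0) => [ei|ii0].
      rewrite ei in ij *; case: (eqVneq j i1) => [->//|ji1].
      by apply: rowc.
    rewrite (rowc i j i0 ij ii0) Esym; apply: rowc => //; by rewrite eq_sym.
  set c := E i0 i1.
  have Ed : dist_mx y = dist_mx x + c *: Jmx R n.
    apply/matrixP => i j; rewrite [(dist_mx x + c *: Jmx R n) i j]mxE [(c *: Jmx R n) i j]mxE J_entry.
    case: (eqVneq i j) => [->|ij]; first by rewrite !dist_diag /= subrr mulr0 addr0.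
    by rewrite /= subr0 mulr1 /c -(off i j ij) /E addrC subrK.
  have [[l hl] uy] := main y (sigma_mx (dist_mx y)) dn'.
  have ly := uy l hl.
  move: hl ly; move: (sigma_mx (dist_mx y)) => sy hl ly.
  have hl2 : second_eig (dist_mx x - (sy - c) *: Jmx R n) l.
    by rewrite scalerBl opprB addrA -Ed.
  have lx := (main x (sy - c) dn).2 l hl2.
  have c0 : c = 0.
    by move: lx; rewrite ly => /eqP; rewrite eq_sym subr_eq addrC -subr_eq subrr => /eqP <-.
  by rewrite Ed c0 scale0r addr0.
Qed.
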